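(* Let $K\ge 2$, let $\mathcal{D}$ be a probability distribution on $\mathcal{X}\times\mathcal{Y}$ with $\mathcal{Y}=\{1,\dots,K\}$, and let $\rho$ be a probability distribution over classifiers $h:\mathcal{X}\to\mathcal{Y}$. Let $W_\rho(X,Y)=\mathbb{E}_{h\sim\rho}[\mathbb{1}(h(X)\neq Y)]$ for $(X,Y)\sim\mathcal{D}$. Suppose $\rho$ is competent, i.e. for every $0\le t\le 1/2$, $$\mathbb{P}_{\mathcal{D}}\big(W_\rho\in[t,1/2)\big)\;\ge\;\mathbb{P}_{\mathcal{D}}\big(W_\rho\in[1/2,1-t]\big).$$ Suppose $\mathbb{E}_{h\sim\rho}[L(h)]\neq 0$. Then the ensemble improvement rate satisfies $\mathrm{EIR}\ge 0$, i.e. $L(h_{\mathrm{MV}})\le \mathbb{E}_{h\sim\rho}[L(h)]$.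
   Context: The error rate of a classifier is $L(h)=\mathbb{E}_{(X,Y)\sim\mathcal{D}}[\mathbb{1}(h(X)\neq Y)]$. The majority vote classifier is $h_{\mathrm{MV}}(x)=\arg\max_j \mathbb{E}_{h\sim\rho}[\mathbb{1}(h(x)=j)]$ (ties broken arbitrarily). The ensemble improvement rate is $\mathrm{EIR}=\big(\mathbb{E}_{h\sim\rho}[L(h)]-L(h_{\mathrm{MV}})\big)/\mathbb{E}_{h\sim\rho}[L(h)]$, defined when $\mathbb{E}_{h\sim\rho}[L(h)]\neq 0$. *)

(* Defs.v *)
From HB Require Import structures.
From mathcomp Require Import all_boot all_order all_algebra.
From mathcomp Require Import all_classical all_reals all_analysis.
Set Implicit Arguments. Unset Strict Implicit. Unset Printing Implicit Defensive.
Import Order.TTheory GRing.Theory Num.Theory.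
Local Open Scope classical_set_scope.
Local Open Scope ring_scope.
Local Open Scope ereal_scope.

(* Framing: (X,Y) ~ D is modelled by a probability space (Omega, P) with
   random elements X : Omega -> Xs (features) and Y : Omega -> 'I_K (labels).
   rho is a probability on a measurable parameter space Theta, and
   h : Theta -> Xs -> 'I_K maps a parameter to a classifier. *)

Definition err_rate (R : realType) (dO : measure_display) (Omega : measurableType dO)
  (P : probability Omega R) (Xs : Type) (K : nat) (X : Omega -> Xs) (Y : Omega -> 'I_K)
  (f : Xs -> 'I_K) : \bar R :=
  P [set w | f (X w) != Y w].

Definition Wrho (R : realType) (dT : measure_display) (Theta : measurableType dT)
  (rho : probability Theta R) (Xs : Type) (K : nat) (h : Theta -> Xs -> 'I_K)
  (x : Xs) (y : 'I_K) : \bar R :=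
  \int[rho]_th ((h th x != y)%:R)%:E.

Definition exp_err (R : realType) (dT dO : measure_display)
  (Theta : measurableType dT) (Omega : measurableType dO)
  (rho : probability Theta R) (P : probability Omega R)
  (Xs : Type) (K : nat) (h : Theta -> Xs -> 'I_K)
  (X : Omega -> Xs) (Y : Omega -> 'I_K) : \bar R :=
  \int[rho]_th err_rate P X Y (h th).

Definition majority_vote (R : realType) (dT : measure_display) (Theta : measurableType dT)
  (rho : probability Theta R) (Xs : Type) (K : nat) (h : Theta -> Xs -> 'I_K)
  (hmv : Xs -> 'I_K) : Prop :=
  forall (x : Xs) (j : 'I_K),
    rho [set th | h th x = j] <= rho [set th | h th x = hmv x].

Definition competent (R : realType) (dT dO : measure_display)
  (Theta : measurableType dT) (Omega : measurableType dO)
  (rho : probability Theta R) (P : probability Omega R)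
  (Xs : Type) (K : nat) (h : Theta -> Xs -> 'I_K)
  (X : Omega -> Xs) (Y : Omega -> 'I_K) : Prop :=
  forall t : R, (0 <= t)%R -> (t <= 2^-1)%R ->
    P [set w | (2^-1)%:E <= Wrho rho h (X w) (Y w) <= (1 - t)%:E]
    <= P [set w | t%:E <= Wrho rho h (X w) (Y w) < (2^-1)%:E].

Definition EIR (R : realType) (EL Lmv : \bar R) : R :=
  ((fine EL - fine Lmv) / fine EL)%R.

(* Main.v *)
Require Import Defs.
From HB Require Import structures.
From mathcomp Require Import all_boot all_order all_algebra.
From mathcomp Require Import all_classical all_reals all_analysis.
From mathcomp Require Import measurable_realfun.
From mathcomp Require Import lra.
Import Order.TTheory GRing.Theory Num.Theory.
Local Open Scope classical_set_scope.
Local Open Scope ring_scope.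

Lemma count_le1 (R : realFieldType) (N : nat) (x : R) : 0 <= x ->
  \sum_(k < N) (((k%:R <= x)%R)%:R : R) <= x + 1.
Proof.
move=> x0; elim: N => [|n IH]; first by rewrite big_ord0; lra.
rewrite big_ord_recr /=.
case: (boolP (n%:R <= x)) => H /=.
  have : \sum_(i < n) (((i%:R <= x)%R)%:R : R) <= n%:R.
    apply: (@le_trans _ _ (\sum_(i < n) (1:R))).
      by apply: ler_sum => i _; rewrite lern1 leq_b1.
    by rewrite sumr_const card_ord.
  lra.
lra.
Qed.

Lemma count_ge1 (R : realFieldType) (N : nat) (y : R) : 0 <= y ->
  (N%:R <= y -> N%:R <= \sum_(k < N) (((k%:R <= y)%R)%:R : R)) /\
  (y <= N%:R -> y <= \sum_(k < N) (((k%:R <= y)%R)%:R : R)).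
Proof.
move=> y0; elim: N => [|n [IH1 IH2]]; first by rewrite big_ord0; split; lra.
rewrite big_ord_recr /= -natr1.
case: (boolP (n%:R <= y)) => H /=.
  have := IH1 H; split; lra.
have H' : y < n%:R by rewrite ltNge.
have := IH2 (ltW H'); split; lra.
Qed.

Lemma pointwise (R : realFieldType) (N : nat) (r : R) : (0 < N)%N -> 0 <= r -> r <= 1 ->
 ((2^-1 <= r)%R)%:R + \sum_(k < N) (2 * N%:R)^-1 * (((k%:R / (2 * N%:R) <= r) && (r < 2^-1))%R)%:R
 <= r + \sum_(k < N) (2 * N%:R)^-1 * (((2^-1 <= r) && (r <= 1 - k%:R / (2 * N%:R)))%R)%:R
   + (2 * N%:R)^-1.
Proof.
move=> N0 r0 r1.
have NP : 0 < 2 * N%:R :> R by rewrite mulr_gt0 // ltr0n.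
have dP : 0 < (2 * N%:R)^-1 :> R by rewrite invr_gt0.
case: (ltP r 2^-1) => Hr.
  rewrite /= add0r.
  under [X in _ <= _ + X + _]eq_bigr do rewrite /= mulr0.
  rewrite big1_eq addr0.
  under eq_bigr do rewrite andbT ler_pdivrMr //.
  rewrite -mulr_sumr.
  have := count_le1 _ N _ (mulr_ge0 r0 (ltW NP)).
  move=> C.
  have : (2 * N%:R)^-1 * \sum_(i < N) (((i%:R <= r * (2 * N%:R))%R)%:R : R)
       <= (2 * N%:R)^-1 * (r * (2 * N%:R) + 1).
    by rewrite ler_pM2l.
  have E : (2 * N%:R)^-1 * (r * (2 * N%:R) + 1) = r + (2 * N%:R)^-1 :> R.
    by rewrite mulrDr mulr1 [r * _]mulrC mulrA mulVf ?mul1r // gt_eqF.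
  rewrite E; lra.
under [X in _ + X <= _]eq_bigr do rewrite andbF mulr0.
rewrite big1_eq addr0.
under [X in _ <= _ + X + _]eq_bigr do rewrite andTb lerBrDr -lerBrDl ler_pdivrMr //.
rewrite -mulr_sumr.
have y0 : 0 <= (1 - r) * (2 * N%:R) by rewrite mulr_ge0 // ?subr_ge0 // ltW.
have yN : (1 - r) * (2 * N%:R) <= N%:R.
  have : 1 - r <= 2^-1 by lra.
  move=> H; have H2 : (1 - r) * (2 * N%:R) <= 2^-1 * (2 * N%:R) by rewrite ler_pM2r.
  apply: (le_trans H2); rewrite mulrA mulVf ?mul1r // gt_eqF //.
have [_ C] := count_ge1 _ N _ y0.
have := C yN => C'.
have : (2 * N%:R)^-1 * ((1 - r) * (2 * N%:R)) <= (2 * N%:R)^-1 * \sum_(i < N) (((i%:R <= (1 - r) * (2 * N%:R))%R)%:R : R).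
  by rewrite ler_pM2l.
have E : (2 * N%:R)^-1 * ((1 - r) * (2 * N%:R)) = 1 - r :> R.
  by rewrite [(1 - r) * _]mulrC mulrA mulVf ?mul1r // gt_eqF.
have T1 : (true%:R : R) = 1 by []. rewrite E T1; lra.
Qed.

Local Open Scope ereal_scope.

Lemma efin01 (R : realType) (x : \bar R) : 0 <= x -> x <= 1 -> x = (fine x)%:E.
Proof. by case: x. Qed.

Lemma inSE (T : Type) (b : T -> bool) w : (w \in [set x | b x]) = b w.
Proof. by apply/idP/idP => [/set_mem|/mem_set]. Qed.

Lemma main_ineq (R : realType) d (Omega : measurableType d) (P : probability Omega R)
  (W : Omega -> \bar R) :
  measurable_fun setT W -> (forall w, 0 <= W w) -> (forall w, W w <= 1) ->
  (forall t : R, (0 <= t)%R -> (t <= 2^-1)%R ->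
    P [set w | (2^-1)%:E <= W w <= (1 - t)%:E] <= P [set w | t%:E <= W w < (2^-1)%:E]) ->
  P [set w | (2^-1)%:E <= W w] <= \int[P]_w W w.
Proof.
move=> mW W0 W1 comp.
have mitv : forall i : interval (\bar R), measurable [set w | W w \in i].
  by move=> i; have := mW measurableT _ (emeasurable_itv i); rewrite setTI.
have mS : measurable [set w | (2^-1)%:E <= W w].
  have -> : [set w | (2^-1)%:E <= W w] = [set w | W w \in `[(2^-1)%:E, +oo[]
    by apply/funext => w /=; rewrite in_itv /= andbT.
  exact: mitv.
have mA : forall a b : R, measurable [set w | a%:E <= W w < b%:E].
  move=> a b; have -> : [set w | a%:E <= W w < b%:E] = [set w | W w \in `[a%:E, b%:E[]
    by apply/funext => w /=; rewrite in_itv.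
  exact: mitv.
have mB : forall a b : R, measurable [set w | a%:E <= W w <= b%:E].
  move=> a b; have -> : [set w | a%:E <= W w <= b%:E] = [set w | W w \in `[a%:E, b%:E]]
    by apply/funext => w /=; rewrite in_itv.
  exact: mitv.
have pE : forall A, measurable A -> P A = (fine (P A))%:E.
  by move=> A mA0; apply: efin01 => //; exact: probability_le1.
have iW0 : 0 <= \int[P]_w W w by apply: integral_ge0 => w _.
have iW1 : \int[P]_w W w <= 1.
  have : \int[P]_w W w <= \int[P]_w (cst 1 w).
    by apply: ge0_le_integral => //; exact: measurable_cst.
  rewrite integral_cst // mul1e => H; apply: (le_trans H); exact: probability_le1.
have mI : forall C : set Omega, measurable C -> measurable_fun setT (fun w => (\1_C w)%:E : \bar R).
  move=> C mC; have : measurable_fun setT (\1_C : _ -> R) by exact: measurable_indic.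
  rewrite -measurable_EFinP; exact.
have iI : forall (c : R) (C : set Omega), (0 <= c)%R -> measurable C ->
    \int[P]_w (c%:E * (\1_C w)%:E) = c%:E * P C.
  move=> c C c0 mC; rewrite ge0_integralZl_EFin //; last exact: mI.
  by rewrite integral_indic // setIT.
have key : forall N : nat, (0 < N)%N ->
    P [set w | (2^-1)%:E <= W w] <= \int[P]_w W w + (((2 * N%:R)^-1 : R))%:E.
  move=> N N0.
  have dd0 : (0 <= (2 * N%:R)^-1 :> R)%R by rewrite invr_ge0 mulr_ge0 // ler0n.
  pose S := [set w | (2^-1)%:E <= W w].
  pose A := fun k : nat => [set w | (k%:R / (2 * N%:R))%:E <= W w < (2^-1)%:E].
  pose B := fun k : nat => [set w | (2^-1)%:E <= W w <= (1 - k%:R / (2 * N%:R))%:E].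
  have mAk k : measurable (A k) := mA _ _.
  have mBk k : measurable (B k) := mB _ _.
  have pw : forall w, (\1_S w)%:E + \sum_(k < N) ((((2 * N%:R)^-1 : R))%:E * (\1_(A k) w)%:E)
      <= W w + \sum_(k < N) ((((2 * N%:R)^-1 : R))%:E * (\1_(B k) w)%:E) + (((2 * N%:R)^-1 : R))%:E.
    move=> w.
    have [r hr] : exists r, W w = r%:E by exists (fine (W w)); exact: efin01.
    have r0 : (0 <= r)%R by rewrite -lee_fin -hr.
    have r1 : (r <= 1)%R by rewrite -lee_fin -hr.
    rewrite indicE /S inSE hr lee_fin.
    under [X in _ + X <= _]eq_bigr => k _ do rewrite indicE /A inSE hr lee_fin lte_fin -EFinM.
    under [X in _ <= _ + X + _]eq_bigr => k _ do rewrite indicE /B inSE hr !lee_fin -EFinM.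
    rewrite !sumEFin -!EFinD lee_fin.
    exact: pointwise.
  have ge0I : forall (C : set Omega) w, 0 <= (\1_C w)%:E :> \bar R.
    by move=> C w; rewrite lee_fin indicE ler0n.
  have ge0T : forall (C : nat -> set Omega) w,
      0 <= \sum_(k < N) ((((2 * N%:R)^-1 : R))%:E * (\1_(C k) w)%:E).
    move=> C w; apply: (big_ind (fun x : \bar R => 0 <= x)) => //;
      try (by move=> x y; exact: adde_ge0); try (by move=> k _; apply: mule_ge0; rewrite ?lee_fin).
  have mT : forall (C : nat -> set Omega), (forall k, measurable (C k)) ->
      measurable_fun setT (fun w => \sum_(k < N) ((((2 * N%:R)^-1 : R))%:E * (\1_(C k) w)%:E)).
    by move=> C mC; apply: emeasurable_sum => k; apply: measurable_funeM; exact: mI.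
  have iT : forall (C : nat -> set Omega), (forall k, measurable (C k)) ->
      \int[P]_w (\sum_(k < N) ((((2 * N%:R)^-1 : R))%:E * (\1_(C k) w)%:E))
      = \sum_(k < N) ((((2 * N%:R)^-1 : R))%:E * P (C k)).
    move=> C mC; rewrite ge0_integral_sum //.
    - by apply: eq_bigr => k _; rewrite iI.
    - by move=> k; apply: measurable_funeM; exact: mI.
  have H : \int[P]_w ((\1_S w)%:E + \sum_(k < N) ((((2 * N%:R)^-1 : R))%:E * (\1_(A k) w)%:E))
      <= \int[P]_w (W w + \sum_(k < N) ((((2 * N%:R)^-1 : R))%:E * (\1_(B k) w)%:E) + (((2 * N%:R)^-1 : R))%:E).
    apply: ge0_le_integral => //.
    - by move=> w _; apply: adde_ge0.
    - by apply: emeasurable_funD; [exact: mI|exact: mT].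
    - apply: emeasurable_funD; last exact: measurable_cst.
      by apply: emeasurable_funD => //; exact: mT.
  have EL : \int[P]_w ((\1_S w)%:E + \sum_(k < N) ((((2 * N%:R)^-1 : R))%:E * (\1_(A k) w)%:E))
      = (fine (P S) + \sum_(k < N) ((2 * N%:R)^-1 * fine (P (A k))))%:E.
    rewrite ge0_integralD //; try (by move=> *; exact: ge0T); try (exact: mI); try (exact: mT).
    rewrite integral_indic // setIT iT // EFinD -sumEFin -(pE S mS); congr (_ + _).
    by apply: eq_bigr => k _; rewrite EFinM -pE.
  have ER : \int[P]_w (W w + \sum_(k < N) ((((2 * N%:R)^-1 : R))%:E * (\1_(B k) w)%:E) + (((2 * N%:R)^-1 : R))%:E)
      = (fine (\int[P]_w W w) + \sum_(k < N) ((2 * N%:R)^-1 * fine (P (B k))) + (2 * N%:R)^-1)%:E.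
    rewrite ge0_integralD //; try (by move=> *; exact: ge0T); try (exact: mI); try (exact: mT).
    - rewrite ge0_integralD //; try (by move=> *; exact: ge0T); try (exact: mI); try (exact: mT).
      rewrite integral_cst //. have P1 : (P : {measure set Omega -> \bar R}) [set: Omega] = 1 by exact: probability_setT. rewrite P1 mule1 iT // !EFinD -sumEFin -(efin01 _ _ iW0 iW1).
      congr (_ + _ + _).
      by apply: eq_bigr => k _; rewrite EFinM -pE.
    - by move=> w _; apply: adde_ge0.
    - by apply: emeasurable_funD => //; exact: mT.
  rewrite EL ER lee_fin in H.
  have cmp : forall k : 'I_N, (fine (P (B k)) <= fine (P (A k)))%R.
    move=> k.
    have h : P (B k) <= P (A k).
      apply: comp; first by rewrite divr_ge0 // ?ler0n // mulr_ge0 // ler0n.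
      rewrite ler_pdivrMr; last by rewrite mulr_gt0 // ltr0n.
      rewrite mulrA mulVf ?mul1r; last by rewrite pnatr_eq0.
      by rewrite ler_nat ltnW.
    by rewrite (pE _ (mAk k)) (pE _ (mBk k)) lee_fin in h.
  have cs : (\sum_(k < N) ((2 * N%:R)^-1 * fine (P (B k))) <= \sum_(k < N) ((2 * N%:R)^-1 * fine (P (A k))))%R.
    by apply: ler_sum => k _; rewrite ler_wpM2l.
  rewrite (pE S mS) (efin01 _ _ iW0 iW1) -EFinD lee_fin.
  lra.
apply/lee_addgt0Pr => e e0.
pose N := (Num.truncn e^-1).+1.
apply: (le_trans (key N isT)).
apply: leeD2l; rewrite lee_fin.
have hN : (e^-1 < N%:R)%R := truncnS_gt _.
have NP : (0 < 2 * N%:R :> R)%R by rewrite mulr_gt0 // ltr0n.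
rewrite -[X in (X <= _)%R]mul1r ler_pdivrMr //.
have h1 : (e * e^-1 < e * N%:R)%R by rewrite ltr_pM2l.
rewrite mulfV ?gt_eqF // in h1.
rewrite mulrCA; lra.
Qed.

Lemma inCE (T : Type) (K : nat) (g : T -> 'I_K) (y : 'I_K) th :
  (th \in ~` [set t | g t = y]) = (g th != y).
Proof.
apply/idP/idP => [/set_mem /= H|/eqP H]; first by apply/eqP.
by apply/mem_set => /= H'; apply: H.
Qed.

Theorem theorem1 (R : realType) (dT dO : measure_display)
  (Theta : measurableType dT) (Omega : measurableType dO)
  (rho : probability Theta R) (P : probability Omega R)
  (Xs : Type) (K : nat) (h : Theta -> Xs -> 'I_K)
  (X : Omega -> Xs) (Y : Omega -> 'I_K) (hmv : Xs -> 'I_K) :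
  (2 <= K)%N ->
  (* measurability of the classifiers *)
  measurable [set p : Theta * Omega | h p.1 (X p.2) != Y p.2] ->
  (forall (x : Xs) (j : 'I_K), measurable [set th | h th x = j]) ->
  measurable [set w | hmv (X w) != Y w] ->
  majority_vote rho h hmv ->
  competent rho P h X Y ->
  exp_err rho P h X Y != 0 ->
  (0 <= EIR (exp_err rho P h X Y) (err_rate P X Y hmv))%R /\
  err_rate P X Y hmv <= exp_err rho P h X Y.
Proof.
move=> K2 mE mh mhmv mv comp EL0.
have WE : forall x y, Wrho rho h x y = rho (~` [set th | h th x = y]).
  move=> x y; rewrite /Wrho -(setIT (~` [set th | h th x = y])) -integral_indic //; last exact/measurableC/mh.
  by apply: eq_integral => th _; rewrite indicE inCE.
pose W := fun w => Wrho rho h (X w) (Y w).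
have W0 : forall w, 0 <= W w by move=> w; rewrite /W WE.
have W1 : forall w, W w <= 1.
  by move=> w; rewrite /W WE; apply: probability_le1; exact/measurableC/mh.
pose E := [set p : Theta * Omega | h p.1 (X p.2) != Y p.2].
pose f := fun p : Theta * Omega => (\1_E p)%:E : \bar R.
have mf : measurable_fun setT f.
  have : measurable_fun setT (\1_E : _ -> R) by exact: measurable_indic.
  by rewrite -measurable_EFinP.
have f0 : forall p, 0 <= f p by move=> p; rewrite lee_fin indicE ler0n.
have Wf : forall w, W w = \int[rho]_th f (th, w).
  by move=> w; rewrite /W /Wrho; apply: eq_integral => th _; rewrite /f indicE inSE.
have mW : measurable_fun setT W.
  have -> : W = fubini_G rho f by apply/funext => w; rewrite Wf.
  exact: measurable_fun_fubini_tonelli_G.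
have sec : forall th, measurable [set w | h th (X w) != Y w].
  move=> th; have := measurable_xsection th mE.
  have -> : xsection [set p : Theta * Omega | h p.1 (X p.2) != Y p.2] th
      = [set w | h th (X w) != Y w].
    by apply/seteqP; split => w /=; rewrite /xsection /= inSE.
  by [].
have EP : forall th, P [set w | h th (X w) != Y w] = \int[P]_w f (th, w).
  move=> th; rewrite -(setIT [set w | h th (X w) != Y w]) -integral_indic //.
have EE : exp_err rho P h X Y = \int[P]_w W w.
  rewrite /exp_err /err_rate.
  under eq_integral => th _ do rewrite EP.
  rewrite (fubini_tonelli f mf f0).
  by apply: eq_integral => w _; rewrite Wf.
have key := main_ineq _ _ _ P W mW W0 W1 comp.
have mS : measurable [set w | (2^-1)%:E <= W w].
  have := mW measurableT _ (emeasurable_itv `[(2^-1)%:E, +oo[); rewrite setTI.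
  have -> : [set w | (2^-1)%:E <= W w] = [set w | W w \in `[(2^-1)%:E, +oo[]
    by apply/funext => w /=; rewrite in_itv /= andbT.
  by [].
have errle : err_rate P X Y hmv <= P [set w | (2^-1)%:E <= W w].
  apply: le_measure; [exact/mem_set|exact/mem_set|].
  move=> w /= Hw.
  rewrite /W WE probability_setC; last exact: mh.
  have ab := mv (X w) (Y w).
  have dj : [set th | h th (X w) = Y w] `&` [set th | h th (X w) = hmv (X w)] = set0.
    apply/seteqP; split => th //= [H1 H2].
    by move/eqP: Hw; apply; rewrite -H1 -H2.
  have s1 : rho [set th | h th (X w) = Y w] + rho [set th | h th (X w) = hmv (X w)] <= 1.
    rewrite -measureU //; apply: probability_le1; exact: measurableU.
  have a0 := measure_ge0 rho [set th | h th (X w) = Y w].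
  have b0 := measure_ge0 rho [set th | h th (X w) = hmv (X w)].
  have a1 := probability_le1 rho (mh (X w) (Y w)).
  have b1 := probability_le1 rho (mh (X w) (hmv (X w))).
  move: ab s1; rewrite (efin01 _ _ a0 a1) (efin01 _ _ b0 b1) -EFinD -EFinB !lee_fin.
  lra.
have Lmv0 : 0 <= err_rate P X Y hmv by [].
have Lmv1 : err_rate P X Y hmv <= 1 by apply: probability_le1.
have le : err_rate P X Y hmv <= exp_err rho P h X Y by rewrite EE; exact: le_trans errle key.
split => //.
have EL0' : 0 <= exp_err rho P h X Y by apply: le_trans le.
have EL1 : exp_err rho P h X Y <= 1.
  rewrite EE; have : \int[P]_w W w <= \int[P]_w (cst 1 w).
    by apply: ge0_le_integral => //; exact: measurable_cst.
  by rewrite integral_cst // mul1e => H; apply: (le_trans H); exact: probability_le1.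
rewrite /EIR; apply: divr_ge0; last by rewrite fine_ge0.
rewrite subr_ge0; apply: fine_le => //; rewrite ge0_fin_numE //.
  exact: le_lt_trans Lmv1 (ltey _).
exact: le_lt_trans EL1 (ltey _).
Qed.
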